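(* Let $F$ be a $p$-rigid field ($p$ odd, $F$ containing a primitive $p$th root of unity), let $a\in\dot F\setminus\dot F^p$ and $E=F(\sqrt[p]{a})$. Let $\epsilon\colon\dot F/\dot F^p\to\dot E/\dot E^p$ be the homomorphism induced by the inclusion $F\hookrightarrow E$. Then, as $\mathbb F_p$-vector spaces, $$\dot E/\dot E^p=\big\langle[\sqrt[p]{a}]_E\big\rangle\oplus\epsilon\big(\dot F/\dot F^p\big).$$
   Context: For a field $L$, $\dot L=L\setminus\{0\}$, $\dot L^p$ is the group of nonzero $p$th powers and $[x]_L=x\dot L^p$. An element $a\in\dot F\setminus\dot F^p$ is $p$-rigid if every element of $N_{F(\sqrt[p]{a})/F}(F(\sqrt[p]{a})^\times)$ lies in $\bigcup_{k=0}^{p-1}a^k\dot F^p$; $F$ is $p$-rigid if every element of $\dot F\setminus\dot F^p$ is $p$-rigid. *)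

(* Defs.v *)
From HB Require Import structures.
From mathcomp Require Import all_boot all_order all_algebra all_field.
Set Implicit Arguments. Unset Strict Implicit. Unset Printing Implicit Defensive.
Import GRing.Theory.
Local Open Scope ring_scope.

Definition is_ppow (K : fieldType) (p : nat) (x : K) : Prop :=
  exists y : K, y != 0 /\ x = y ^+ p.

(* Field norm N_{L/F}(x) = det of the F-linear map (v |-> v * x) on L. *)
Definition fnorm (F : fieldType) (L : fieldExtType F) (x : L) : F :=
  \det (passmx.mxof (vbasis fullv) (vbasis fullv) (amulr x)).

(* L is (a model of) F(alpha) with alpha^p = a *)
Definition is_pure_ext (F : fieldType) (p : nat) (a : F)
  (L : fieldExtType F) (alpha : L) : Prop :=
  alpha ^+ p = a%:A /\ (<<1; alpha>>%VS = fullv).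

Definition p_rigid_elt (F : fieldType) (p : nat) (a : F) : Prop :=
  a != 0 /\ ~ is_ppow p a /\
  forall (L : fieldExtType F) (alpha : L), is_pure_ext p a alpha ->
  forall x : L, x != 0 ->
  exists2 k : nat, (k < p)%N & exists2 c : F, is_ppow p c & fnorm x = a ^+ k * c.

Definition p_rigid_field (F : fieldType) (p : nat) : Prop :=
  forall a : F, a != 0 -> ~ is_ppow p a -> p_rigid_elt p a.

(* Main.v *)
Require Import Defs.
From HB Require Import structures.
From mathcomp Require Import all_boot all_order all_algebra all_field.
From mathcomp Require Import ring.
Set Implicit Arguments. Unset Strict Implicit. Unset Printing Implicit Defensive.
Import GRing.Theory.
Local Open Scope ring_scope.

Section Main.
Variables (F : fieldType) (p : nat) (zeta : F) (a : F) (E : fieldExtType F) (alpha : E).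
Hypotheses (p_prime : prime p) (p_odd : odd p) (zeta_prim : p.-primitive_root zeta)
  (a_nz : a != 0) (a_npow : ~ is_ppow p a) (hE : is_pure_ext p a alpha).

Let z : E := zeta%:A.
Lemma z_prim : p.-primitive_root z.
Proof. by rewrite /z (_ : zeta%:A = in_alg E zeta) // fmorph_primitive_root. Qed.
Lemma p_gt0 : (0 < p)%N. Proof. exact: prime_gt0. Qed.
Lemma p_gt2 : (2 < p)%N.
Proof.
have := prime_gt1 p_prime; case: p p_odd => [|[|[|q]]] //.
Qed.
Lemma pE_neq0 : (p%:R : E) != 0.
Proof. exact: (prim_root_natf_neq0 z_prim). Qed.
Lemma alpha_p : alpha ^+ p = a%:A. Proof. by case: hE. Qed.
Lemma alpha_nz : alpha != 0.
Proof.
apply/negP => /eqP a0; move: alpha_p; rewrite a0 expr0n gtn_eqF ?p_gt0 //.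
by move/esym/eqP; rewrite scaler_eq0 oner_eq0 orbF (negPf a_nz).
Qed.
Lemma full_adj : <<1; alpha>>%VS = fullv. Proof. by case: hE. Qed.
Let Q : {poly E} := 'X^p - (a%:A)%:P.

Lemma zexp_inj i j : (i < p)%N -> (j < p)%N -> z ^+ i = z ^+ j -> i = j.
Proof.
move=> ip jp /eqP; rewrite (eq_prim_root_expr z_prim) => /eqP.
by rewrite !modn_small.
Qed.

Lemma Q_prod : Q = \prod_(i <- iota 0 p) ('X - (z ^+ i * alpha)%:P).
Proof.
rewrite -(big_map (fun i => z ^+ i * alpha) xpredT (fun w => 'X - w%:P)).
rewrite {1}(@all_roots_prod_XsubC _ Q [seq z ^+ i * alpha | i <- iota 0 p]).
- by rewrite lead_coefXnsubC ?p_gt0 // scale1r.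
- by rewrite size_XnsubC ?p_gt0 // size_map size_iota.
- apply/allP=> _ /mapP[i _ ->]; rewrite /Q rootE !hornerE.
  by rewrite exprMn exprAC (prim_expr_order z_prim) expr1n mul1r alpha_p subrr.
- rewrite uniq_rootsE map_inj_in_uniq ?iota_uniq // => i j.
  rewrite !mem_iota !add0n => /andP[_ ip] /andP[_ jp] /(mulIf alpha_nz).
  exact: zexp_inj.
Qed.

Lemma minPoly_dvdQ : minPoly 1%AS alpha %| Q.
Proof.
apply: minPoly_dvdp.
  by rewrite /Q polyOverXnsubC rpredZ ?mem1v.
by rewrite /Q rootE !hornerE alpha_p subrr.
Qed.

Lemma prod_seq_const (R : comPzRingType) (I : Type) (r : seq I) (x : R) :
  \prod_(i <- r) x = x ^+ size r.
Proof. by elim: r => [|i r IH]; rewrite ?big_nil ?big_cons ?IH ?exprS. Qed.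

Lemma coprime_pow_mem (R : fieldType) (P : R -> Prop) (x : R) (k : nat) :
  (forall u v, P u -> P v -> P (u * v)) -> (forall u, P u -> P u^-1) -> x != 0 ->
  ~~ (p %| k)%N -> P (x ^+ k) -> P (x ^+ p) -> P x.
Proof.
move=> PM PV x0 pk Pk Pp.
have [u _ hu] := Bezoutl k p_gt0.
have cpk : coprime p k by rewrite prime_coprime.
move: hu; rewrite (eqP cpk) => /divnK hq.
have -> : x = (x ^+ p) ^+ ((1 + u * k) %/ p) / (x ^+ k) ^+ u.
  rewrite -!exprM [(p * _)%N]mulnC hq exprD expr1 [(k * u)%N]mulnC mulfK //.
  by rewrite expf_neq0.
have P1 : P 1 by rewrite -(mulfV (expf_neq0 k x0)); apply: PM => //; apply: PV.
have PX : forall n (v : R), P v -> P (v ^+ n).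
  by move=> n v Pv; elim: n => [|n IH]; rewrite ?expr0 ?exprS //; apply: PM.
by apply: PM; [apply: PX | apply: PV; apply: PX].
Qed.

Lemma in1_alg (v : E) : v \in 1%VS -> exists c : F, v = c%:A.
Proof. by move/vlineP. Qed.

Lemma alpha_notin1 : alpha \notin 1%VS.
Proof.
apply/negP => /in1_alg[c ac]; apply: a_npow.
have ea : a = c ^+ p.
  by apply: (fmorph_inj (in_alg E)); rewrite rmorphXn /= -alpha_p ac.
exists c; split => //; apply/eqP => c0; move: a_nz.
by rewrite ea c0 expr0n gtn_eqF ?p_gt0 ?eqxx.
Qed.

Lemma z_nz : z != 0.
Proof.
apply/eqP => zz; move: (prim_expr_order z_prim); rewrite zz expr0n gtn_eqF ?p_gt0 //.
by move/eqP; rewrite eq_sym oner_eq0.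
Qed.

Lemma z_in1 i : z ^+ i \in 1%VS.
Proof. by rewrite rpredX // rpredZ ?mem1v. Qed.

Lemma minPoly_eqQ : minPoly 1%AS alpha = Q /\ adjoin_degree 1%AS alpha = p.
Proof.
have := minPoly_dvdQ; rewrite Q_prod => /dvdp_prod_XsubC[msk hm].
set r := mask msk (iota 0 p) in hm.
have mE : minPoly 1%AS alpha = \prod_(i <- r) ('X - (z ^+ i * alpha)%:P).
  by apply/eqP; rewrite -eqp_monic ?monic_minPoly ?monic_prod_XsubC.
have dE : adjoin_degree 1%AS alpha = size r.
  by have := size_minPoly 1%AS alpha; rewrite mE size_prod_XsubC => -[].
have Q0 : Q != 0 by rewrite -size_poly_eq0 /Q size_XnsubC ?p_gt0.
have dle : (size r <= p)%N.
  have := dvdp_leq Q0 minPoly_dvdQ.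
  by rewrite size_minPoly /Q size_XnsubC ?p_gt0 // dE.
have rp : size r = p.
  apply/eqP; rewrite eqn_leq dle /=; rewrite leqNgt; apply/negP => rlt.
  apply/negP: alpha_notin1; rewrite negbK.
  have c0 := polyOverP (minPolyOver 1%AS alpha) 0.
  rewrite mE -(big_map (fun i => z ^+ i * alpha) xpredT (fun w => 'X - w%:P)) in c0.
  rewrite coef0_prod_XsubC big_map size_map big_split /= prod_seq_const in c0.
  have zin : \prod_(i <- r) z ^+ i \in 1%VS by rewrite rpred_prod // => i _; exact: z_in1.
  have zn0 : \prod_(i <- r) z ^+ i != 0.
    rewrite prodf_seq_neq0; apply/allP => i _ /=.
    by rewrite expf_neq0 // z_nz.
  apply: (@coprime_pow_mem E (fun v => v \in 1%VS) alpha (size r)).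
  - by move=> u v; apply: rpredM.
  - by move=> u /= Pu; rewrite (memvV (1%AS : {subfield E})).
  - exact: alpha_nz.
  - apply/negP => /dvdn_leq; rewrite -dE /= => /(_ isT); rewrite leqNgt.
    by rewrite -dE in rlt; rewrite rlt.
  - have -> : alpha ^+ size r = ((-1) ^+ size r * \prod_(i <- r) z ^+ i)^-1 *
        ((-1) ^+ size r * (\prod_(i <- r) z ^+ i * alpha ^+ size r)).
      by rewrite [_ * (_ * alpha ^+ _)]mulrA mulKf // mulf_neq0 // signr_eq0.
    by rewrite rpredM // rpredV // rpredM // rpredX // rpredN mem1v.
  - by rewrite alpha_p rpredZ ?mem1v.
split; last by rewrite dE.
rewrite -Q_prod; apply/eqP; rewrite -eqp_monic ?monic_minPoly ?monicXnsubC ?p_gt0 //.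
rewrite -dvdp_size_eqp ?minPoly_dvdQ // size_minPoly dE rp.
by rewrite /Q size_XnsubC ?p_gt0.
Qed.

Lemma dimE : \dim (fullv : {vspace E}) = p.
Proof.
have := dim_Fadjoin 1%AS alpha; rewrite (proj2 minPoly_eqQ) dimv1 muln1.
by move=> <-; rewrite -full_adj.
Qed.

Definition sig1 : 'End(E) := kHomExtend 1%AS \1%VF alpha (z * alpha).

Lemma root_za : root (map_poly \1%VF (minPoly 1%AS alpha)) (z * alpha).
Proof.
rewrite (kHom_poly_id (kHom1 1%AS 1%AS) (minPolyOver 1%AS alpha)).
rewrite (proj1 minPoly_eqQ) /Q rootE !hornerE exprMn (prim_expr_order z_prim).
by rewrite mul1r alpha_p subrr.
Qed.

Lemma sig1_hom : kHom 1%AS fullv sig1.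
Proof.
have := kHomExtendP (subvv 1%AS) (kHom1 1%AS 1%AS) root_za.
by rewrite -full_adj.
Qed.

Lemma sig1_alpha : sig1 alpha = z * alpha.
Proof. exact: (kHomExtend_val (kHom1 1%AS 1%AS) root_za). Qed.

Definition sig (k : nat) : 'End(E) := iter k (fun f => (sig1 \o f)%VF) \1%VF.

Arguments sig k : simpl never.

Lemma sig0 v : sig 0 v = v. Proof. by rewrite /= lfunE. Qed.
Lemma sigS k v : sig k.+1 v = sig1 (sig k v). Proof. by rewrite /= comp_lfunE. Qed.

Lemma sig_hom k : kHom 1%AS fullv (sig k).
Proof.
have [f1 fM] := kHomP_tmp sig1_hom.
elim: k => [|k IH]; first exact: kHom1.
have [g1 gM] := kHomP_tmp IH.
apply/kHomP_tmp; split => [x x1 | x y _ _]; rewrite !sigS.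
  by rewrite g1 // f1.
by rewrite gM ?memvf // fM ?memvf.
Qed.

Lemma sig_mul k u v : sig k (u * v) = sig k u * sig k v.
Proof. by have [_ ->] := kHomP_tmp (sig_hom k); rewrite ?memvf. Qed.

Lemma sig_alg k (c : F) : sig k (c%:A) = c%:A.
Proof. have [h _] := kHomP_tmp (sig_hom k); apply: h; exact: (rpredZ c (mem1v _)). Qed.

Lemma sig_z k : sig k z = z. Proof. exact: sig_alg. Qed.

Lemma sig_one k : sig k 1 = 1.
Proof. by rewrite -(scale1r (1 : E)) sig_alg. Qed.

Lemma sig_X k u n : sig k (u ^+ n) = sig k u ^+ n.
Proof. by elim: n => [|n IH]; rewrite ?sig_one // !exprS sig_mul IH. Qed.

Lemma sig_alpha k : sig k alpha = z ^+ k * alpha.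
Proof.
elim: k => [|k IH]; first by rewrite sig0 mul1r.
by rewrite sigS IH; have [f1 fM] := kHomP_tmp sig1_hom; rewrite fM ?memvf // sig1_alpha f1 ?z_in1 // mulrA -exprSr.
Qed.

Lemma sig_inv k u : sig k (u^-1) = (sig k u)^-1.
Proof. exact: (kHom_inv (sig_hom k) (memvf u)). Qed.

Lemma sig_p v : sig p v = v.
Proof.
have : v \in <<1%AS; alpha>>%VS by rewrite full_adj memvf.
case/Fadjoin_polyP => q q1 ->.
rewrite (kHom_horner (sig_hom p)) ?memvf //; last first.
  by apply/polyOverP => i; rewrite memvf.
by rewrite (kHom_poly_id (sig_hom p)) // sig_alpha (prim_expr_order z_prim) mul1r.
Qed.

Lemma sig_eq0 k v : (sig k v == 0) = (v == 0).
Proof.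
apply/idP/idP => [|/eqP->]; last by rewrite linear0.
apply: contraLR => v0; apply/eqP => s0.
by move: (sig_mul k v v^-1); rewrite mulfV // sig_one s0 mul0r; apply/eqP; rewrite oner_eq0.
Qed.

Lemma geo_sum (y : E) : y ^+ p = 1 ->
  \sum_(j < p) y ^+ j = if y == 1 then p%:R else 0.
Proof.
move=> yp; have [->|y1] := eqVneq y 1.
  by rewrite (eq_bigr (fun _ => 1)) => [|j _]; rewrite ?expr1n // sumr_const card_ord.
apply/eqP; have := subrX1 y p; rewrite yp subrr => /esym/eqP.
by rewrite mulf_eq0 subr_eq0 (negPf y1).
Qed.

Lemma z_eq1 k m : (k < p)%N -> (m < p)%N -> (z ^+ ((p.-1 * m) + k) == 1) = (k == m).
Proof.
move=> kp mp.
rewrite -(inj_eq (mulIf (expf_neq0 m z_nz))) mul1r -exprD.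
have -> : ((p.-1 * m + k) + m = p * m + k)%N.
  by rewrite -addnA [(k + m)%N]addnC addnA -mulSnr prednK ?p_gt0.
rewrite exprD exprM (prim_expr_order z_prim) expr1n mul1r.
by apply/eqP/eqP => [/zexp_inj-> //|->].
Qed.

Lemma Aentry (x : E) i j :
  passmx.mxof (vbasis fullv) (vbasis fullv) (amulr x) i j =
  coord (vbasis fullv) j ((vbasis fullv)`_i * x).
Proof. by rewrite !mxE /= passmx.vecof_delta /amulr lfunE. Qed.

Lemma ltn_dim (k : 'I_(\dim (fullv : {vspace E}))) : (k < p)%N.
Proof. by rewrite -dimE ltn_ord. Qed.

Lemma dedekind (w : 'rV[E]_(\dim (fullv : {vspace E}))) :
  (forall v, \sum_k w 0 k * sig k v = 0) -> w = 0.
Proof.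
move=> hw.
have h3 j : \sum_k w 0 k * z ^+ (k * j) = 0.
  have := hw (alpha ^+ j).
  under eq_bigr => k _ do rewrite sig_X sig_alpha exprMn -exprM mulrA.
  rewrite -mulr_suml => /eqP; rewrite mulf_eq0 expf_eq0 (negPf alpha_nz) andbF orbF.
  by move/eqP.
apply/rowP => m; rewrite mxE.
have : \sum_(j < p) z ^+ (p.-1 * m * j) * (\sum_k w 0 k * z ^+ (k * j)) = 0.
  by rewrite big1 // => j _; rewrite h3 mulr0.
have inner (k : 'I_(\dim (fullv : {vspace E}))) :
    \sum_(j < p) z ^+ (p.-1 * m * j) * (w 0 k * z ^+ (k * j)) =
    w 0 k * (if k == m :> nat then p%:R else 0).
  rewrite -z_eq1 ?ltn_dim // -geo_sum; last first.
    by rewrite -exprM mulnC exprM (prim_expr_order z_prim) expr1n.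
  rewrite mulr_sumr; apply: eq_bigr => j _.
  by rewrite mulrCA -exprD -mulnDl -exprM.
under eq_bigr => j _ do rewrite mulr_sumr.
rewrite exchange_big /=.
under eq_bigr => k _ do rewrite inner.
rewrite (bigD1 m) //= eqxx big1 => [|k km]; last first.
  by rewrite (inj_eq val_inj) (negPf km) mulr0.
rewrite addr0 => /eqP; rewrite mulf_eq0 (negPf pE_neq0) orbF.
by move/eqP.
Qed.

Lemma fnormE (x : E) : (fnorm x)%:A = \prod_(k < p) sig k x.
Proof.
set e := vbasis (fullv : {vspace E}).
set A := passmx.mxof e e (amulr x).
pose X : 'M[E]_(\dim (fullv : {vspace E})) := \matrix_(k, i) sig k e`_i.
have key : X *m (map_mx (in_alg E) A)^T =
    diag_mx (\row_(k < \dim (fullv : {vspace E})) sig k x) *m X.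
  apply/matrixP => k i; rewrite mul_diag_mx !mxE.
  under eq_bigr => j _ do rewrite !mxE passmx.vecof_delta /amulr lfunE /= mulr_algr -linearZ.
  rewrite -linear_sum /= -(coord_vbasis (memvf (e`_i * x))) sig_mul mulrC.
  by [].
have detX : \det X != 0.
  apply/negP => /det0P[w w0 wX]; move/negP: w0; apply.
  apply/eqP; apply: dedekind => v.
  rewrite (coord_vbasis (memvf v)).
  under eq_bigr => k _ do rewrite linear_sum mulr_sumr.
  rewrite exchange_big big1 //= => i _.
  under eq_bigr => k _ do rewrite linearZ /= -scalerAr.
  rewrite -scaler_sumr.
  move/rowP/(_ i): wX; rewrite !mxE.
  under eq_bigr => k _ do rewrite mxE.
  by move=> ->; rewrite scaler0.
have := congr1 determinant key.
rewrite !det_mulmx det_tr det_map_mx det_diag [RHS]mulrC => /(mulfI detX) /= ->.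
under eq_bigr => k _ do rewrite mxE.
by rewrite -(big_mkord xpredT (fun k => sig k x)) dimE big_mkord.
Qed.

Definition N (u : E) := \prod_(k < p) sig k u.

Lemma N_mul u v : N (u * v) = N u * N v.
Proof. by rewrite /N -big_split; apply: eq_bigr => k _; rewrite sig_mul. Qed.

Lemma N_inv u : N (u^-1) = (N u)^-1.
Proof. by rewrite /N -prodfV; apply: eq_bigr => k _; rewrite sig_inv. Qed.

Lemma N_alg (c : F) : N (c%:A) = (c ^+ p)%:A.
Proof.
rewrite /N (eq_bigr (fun _ => c%:A)) => [|k _]; last by rewrite sig_alg.
by rewrite prodr_const card_ord exprZn expr1n.
Qed.

Lemma N_alpha : N alpha = a%:A.
Proof.
rewrite /N (eq_bigr (fun k : 'I_p => z ^+ k * alpha)) => [|k _]; last by rewrite sig_alpha.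
rewrite big_split /= prodr_const card_ord alpha_p prodrXr.
rewrite -(big_mkord xpredT (fun k => k)) bin2_sum.
have /dvdnP[q ->] := prime_dvd_bin p_prime (p_gt2 : (0 < 2 < p)%N).
by rewrite mulnC exprM (prim_expr_order z_prim) expr1n mul1r.
Qed.

Lemma N_fnorm u : N u = (fnorm u)%:A.
Proof. by rewrite fnormE. Qed.

Lemma sig1S k v : sig 1 (sig k v) = sig k.+1 v.
Proof. by rewrite !sigS sig0. Qed.

Lemma hilbert90 (y : E) : N y = 1 -> exists2 v, v != 0 & y * sig 1 v = v.
Proof.
move=> Ny.
pose P i := \prod_(k < i) sig k y.
pose s c := \sum_(i < p) P i * sig i c.
have fix_s c : y * sig 1 (s c) = s c.
  have hstep : forall i, y * sig 1 (P i * sig i c) = P i.+1 * sig i.+1 c.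
    move=> i; rewrite sig_mul sig1S mulrA; congr (_ * _).
    rewrite /P big_ord_recl sig0; congr (_ * _).
    rewrite /P (big_morph (sig 1) (sig_mul 1) (sig_one 1)).
    by apply: eq_bigr => k _; rewrite sig1S.
  rewrite /s linear_sum mulr_sumr.
  under eq_bigr => i _ do rewrite hstep.
  have gen : forall n (f : nat -> E), f n = f 0%N ->
      \sum_(i < n) f i.+1 = \sum_(i < n) f i.
    move=> [|n] f fn; first by rewrite !big_ord0.
    by rewrite big_ord_recr /= big_ord_recl /= fn addrC.
  apply: (gen p (fun i => P i * sig i c)).
  by rewrite /P -/(N y) Ny sig_p big_ord0 sig0.
case: (boolP [exists j : 'I_p, s (alpha ^+ j) != 0]) => [/existsP[j hj]|/existsPn hn].
  by exists (s (alpha ^+ j)).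
exfalso.
have h1 (j : 'I_p) : \sum_(i < p) P i * z ^+ (i * j) = 0.
  have := hn j; rewrite negbK /s.
  under eq_bigr => i _ do rewrite sig_X sig_alpha exprMn -exprM mulrA.
  rewrite -mulr_suml mulf_eq0 expf_eq0 (negPf alpha_nz) andbF orbF.
  by move/eqP.
have : \sum_(j < p) \sum_(i < p) P i * z ^+ (i * j) = 0.
  by rewrite big1 // => j _; rewrite h1.
rewrite exchange_big /=.
under eq_bigr => i _ do rewrite -mulr_sumr.
have inner (i : 'I_p) : \sum_(j < p) z ^+ (i * j) = if i == 0 :> nat then p%:R else 0.
  have := z_eq1 (ltn_ord i) p_gt0; rewrite muln0 add0n => <-.
  rewrite -geo_sum; last by rewrite -exprM mulnC exprM (prim_expr_order z_prim) expr1n.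
  by apply: eq_bigr => j _; rewrite exprM.
under eq_bigr => i _ do rewrite inner.
rewrite (bigD1 (Ordinal p_gt0)) //= big1 => [|i i0]; last first.
  rewrite (_ : (i == 0 :> nat) = false) ?mulr0 //; apply/negP => /eqP h; move/negP: i0; apply; apply/eqP; exact: ord_inj.
rewrite addr0 /P big_ord0 mul1r; apply/eqP; exact: pE_neq0.
Qed.

Definition inGrp (x : E) := exists k (f : F) (y : E),
  [/\ f != 0, y != 0 & x = alpha ^+ k * f%:A * y ^+ p].

Lemma alg_nz (f : F) : f != 0 -> f%:A != 0 :> E.
Proof. by move=> f0; rewrite scaler_eq0 (negPf f0) oner_eq0. Qed.

Lemma algM (f g : F) : (f * g)%:A = f%:A * g%:A :> E.
Proof. by rewrite mulr_algl scalerA. Qed.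

Lemma inS_nz x : inGrp x -> x != 0.
Proof.
move=> [k [f [y [f0 y0 ->]]]].
by rewrite !mulf_neq0 ?expf_neq0 ?alpha_nz ?alg_nz.
Qed.

Lemma inS_pow y : y != 0 -> inGrp (y ^+ p).
Proof. by move=> y0; exists 0%N, 1, y; split; rewrite ?oner_eq0 // expr0 scale1r !mul1r. Qed.

Lemma inS_one : inGrp 1.
Proof. by rewrite -(expr1n _ p); apply: inS_pow; rewrite oner_eq0. Qed.

Lemma inS_mul u v : inGrp u -> inGrp v -> inGrp (u * v).
Proof.
move=> [k [f [y [f0 y0 ->]]]] [k' [f' [y' [f0' y0' ->]]]].
exists (k + k')%N, (f * f'), (y * y'); split; rewrite ?mulf_neq0 //.
by rewrite exprD exprMn algM; ring.
Qed.

Lemma alpha_inv_pow k : alpha ^+ k * alpha ^+ (k * p.-1) = (a ^+ k)%:A.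
Proof.
rewrite -exprD -{1}(muln1 k) -mulnDr add1n prednK ?p_gt0 //.
by rewrite mulnC exprM alpha_p exprZn expr1n.
Qed.

Lemma inS_inv u : inGrp u -> inGrp (u^-1).
Proof.
move=> [k [f [y [f0 y0 ->]]]].
exists (k * p.-1)%N, (f^-1 * (a ^+ k)^-1), (y^-1); split.
- by rewrite mulf_neq0 ?invr_eq0 ?expf_neq0.
- by rewrite invr_eq0.
have ak : (a ^+ k)%:A != 0 :> E by rewrite alg_nz ?expf_neq0.
have e1 : f%:A * (f^-1)%:A = 1 :> E.
  by rewrite -algM mulfV // scale1r.
have e2 : (a ^+ k)%:A * ((a ^+ k)^-1)%:A = 1 :> E.
  by rewrite -algM mulfV ?expf_neq0 // scale1r.
apply: (mulfI (inS_nz (ex_intro _ k (ex_intro _ f (ex_intro _ y (And3 f0 y0 erefl)))))).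
rewrite mulfV; last by rewrite !mulf_neq0 ?expf_neq0 ?alpha_nz ?alg_nz.
rewrite algM exprVn; symmetry.
set A1 := alpha ^+ k; set A2 := alpha ^+ _; set Y := y ^+ p.
have Y0 : Y != 0 by rewrite expf_neq0.
transitivity ((A1 * A2) * (f%:A * (f^-1)%:A) * ((a ^+ k)^-1)%:A * (Y * Y^-1)).
  by ring.
by rewrite /A1 /A2 alpha_inv_pow e1 mulr1 e2 mul1r mulfV.
Qed.

Lemma inS_X u n : inGrp u -> inGrp (u ^+ n).
Proof. by move=> Su; elim: n => [|n IH]; [rewrite expr0; exact: inS_one | rewrite exprS; exact: inS_mul]. Qed.

Lemma inS_sig j u : inGrp u -> inGrp (sig j u).
Proof.
move=> [k [f [y [f0 y0 ->]]]].
exists k, (zeta ^+ (j * k) * f), (sig j y); split.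
- by rewrite mulf_neq0 // expf_neq0 //; apply/eqP => z0; move: z_nz; rewrite /z z0 scale0r eqxx.
- by rewrite sig_eq0.
rewrite !sig_mul sig_X sig_alpha sig_alg sig_X algM exprMn -exprM.
have -> : (zeta ^+ (j * k))%:A = z ^+ (j * k) by rewrite /z -in_algE rmorphXn.
by ring.
Qed.

Definition tau (s : E) := sig 1 s * s ^+ p.-1.

Lemma tau_mul u v : tau (u * v) = tau u * tau v.
Proof. by rewrite /tau sig_mul exprMn; ring. Qed.

Lemma tau_inv u : tau (u^-1) = (tau u)^-1.
Proof. by rewrite /tau sig_inv exprVn invfM. Qed.

Lemma tau_nz u : u != 0 -> tau u != 0.
Proof. by move=> u0; rewrite /tau mulf_neq0 ?sig_eq0 ?expf_neq0. Qed.

Lemma inS_tau u : inGrp u -> inGrp (tau u).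
Proof. by move=> Su; apply: inS_mul; [apply: inS_sig | apply: inS_X]. Qed.

Definition T j s := iter j tau s.

Lemma T_mul j u v : T j (u * v) = T j u * T j v.
Proof. by elim: j => [|j IH] //=; rewrite IH tau_mul. Qed.

Lemma T_inv j u : T j (u^-1) = (T j u)^-1.
Proof. by elim: j => [|j IH] //=; rewrite IH tau_inv. Qed.

Lemma T_nz j u : u != 0 -> T j u != 0.
Proof. by move=> u0; elim: j => [|j IH] //=; rewrite tau_nz. Qed.

Lemma inS_T j u : inGrp u -> inGrp (T j u).
Proof. by move=> Su; elim: j => [|j IH] //=; apply: inS_tau. Qed.

Lemma stepA (hrig : p_rigid_elt p a) x : x != 0 -> exists2 s, s != 0 & inGrp (x / tau s).
Proof.
move=> x0; have [_ [_ hr]] := hrig.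
have [k kp [c [d [d0 cd]] hx]] := hr E alpha hE x x0.
have w0 : alpha ^+ k * d%:A != 0 by rewrite mulf_neq0 ?expf_neq0 ?alpha_nz ?alg_nz.
pose y := x / (alpha ^+ k * d%:A).
have Ny : N y = 1.
  rewrite /y N_mul N_inv N_mul N_fnorm hx cd.
  have NX : forall u n, N (u ^+ n) = N u ^+ n.
    by move=> u n; rewrite /N -prodrXl; apply: eq_bigr => i _; rewrite sig_X.
  rewrite NX N_alpha N_alg algM exprZn expr1n; apply: mulfV.
  by rewrite mulf_neq0 // ?alg_nz ?expf_neq0.
have [v v0 hv] := hilbert90 Ny.
exists v^-1; first by rewrite invr_eq0.
rewrite tau_inv invrK /tau.
have -> : x = alpha ^+ k * d%:A * y by rewrite /y mulrC divfK.
exists k, d, v; split => //.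
have s0 : sig 1 v != 0 by rewrite sig_eq0.
have vp : v ^+ p = v * v ^+ p.-1 by rewrite -exprS prednK ?p_gt0.
rewrite vp -[X in _ = _ * (X * _)]hv; ring.
Qed.

Lemma iterA (hrig : p_rigid_elt p a) j x : x != 0 -> exists2 s, s != 0 & inGrp (x / T j s).
Proof.
elim: j x => [|j IH] x x0.
  by exists x => //; rewrite /= mulfV //; exact: inS_one.
have [s s0 hs] := IH x x0; have [s2 s20 hs2] := stepA hrig s0.
exists s2 => //.
have := inS_T j hs2; rewrite T_mul T_inv /T -iterSr -/(T j s) -/(T j.+1 s2) => h.
have -> : x / T j.+1 s2 = (x / T j s) * (T j s / T j.+1 s2).
  by rewrite mulrA divfK ?T_nz.
exact: inS_mul.
Qed.

Lemma sig_add i k v : sig i (sig k v) = sig (i + k) v.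
Proof. by elim: i => [|i IH]; rewrite ?sig0 // !sigS IH. Qed.

Lemma bump0 n : bump 0 n = n.+1. Proof. by rewrite /bump leq0n add1n. Qed.

Lemma T_formula j s :
  T j s = \prod_(i < j.+1) sig i s ^+ ('C(j, i) * p.-1 ^ (j - i)).
Proof.
elim: j s => [|j IH] s.
  by rewrite big_ord_recl big_ord0 /= sig0 mulr1 expr1.
rewrite /T iterSr -/(T j (tau s)) IH.
have h1 (i : 'I_j.+1) : sig i (tau s) ^+ ('C(j, i) * p.-1 ^ (j - i)) =
   sig i.+1 s ^+ ('C(j, i) * p.-1 ^ (j - i)) * sig i s ^+ (p.-1 * ('C(j, i) * p.-1 ^ (j - i))).
  by rewrite /tau sig_mul sig_add addn1 sig_X exprMn -exprM.
under eq_bigr => i _ do rewrite h1.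
rewrite big_split /=.
rewrite [RHS]big_ord_recl /= bin0 mul1n subn0.
under [in RHS]eq_bigr => i _ do rewrite bump0 binS mulnDl exprD subSS.
rewrite big_split /=.
have eC : \prod_(i < j.+1) sig i s ^+ (p.-1 * ('C(j, i) * p.-1 ^ (j - i))) =
    sig 0 s ^+ (p.-1 ^ j.+1) *
    \prod_(i < j.+1) sig i.+1 s ^+ ('C(j, i.+1) * p.-1 ^ (j - i)).
  rewrite big_ord_recl /= bin0 mul1n subn0 -expnS; congr (_ * _).
  rewrite [RHS]big_ord_recr /= bin_small // mul0n expr0 mulr1.
  apply: eq_bigr => i _; rewrite bump0.
  have hi : (i < j)%N := ltn_ord i.
  by rewrite mulnCA -expnS subnSK.
rewrite eC; ring.
Qed.

Lemma Tp_inS s : s != 0 -> inGrp (T p s).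
Proof.
move=> s0; rewrite T_formula (bigD1 ord0) //= (bigD1 ord_max) //=.
have key : forall u v w, inGrp (u * v) -> inGrp w -> inGrp (u * (v * w)).
  by move=> u v w h1 h2; rewrite mulrA; apply: inS_mul.
apply: key.
  rewrite bin0 binn subn0 subnn expn0 mul1n muln1 sig0 sig_p expr1 -exprSr.
  have hd : (p %| (p.-1 ^ p).+1)%N.
    rewrite /dvdn -addn1 -[((_ + 1) %% p)%N]modnDml fermat_little // modnDml addn1 prednK ?p_gt0 //.
    by rewrite modnn.
  rewrite -(divnK hd) exprM; apply: inS_pow; exact: expf_neq0.
apply: (big_ind inGrp inS_one inS_mul) => i /andP[i0 im].
have h0 : (0 < i)%N by rewrite lt0n; apply: contra i0 => /eqP h; apply/eqP/ord_inj.
have hp : (i < p)%N.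
  rewrite ltn_neqAle -ltnS ltn_ord andbT; apply: contra im => /eqP h; apply/eqP/ord_inj.
  by rewrite h.
have /dvdnP[q ->] := prime_dvd_bin p_prime (introT andP (conj h0 hp)).
rewrite mulnAC exprM; apply: inS_pow.
  by rewrite expf_neq0 // sig_eq0.
by apply/eqP => /(congr1 val) /= /eqP; rewrite gtn_eqF ?p_gt0.
Qed.

Lemma span (hrig : p_rigid_elt p a) x : x != 0 -> inGrp x.
Proof.
move=> x0; have [s s0 h] := iterA hrig p x0.
by have := inS_mul h (Tp_inS s0); rewrite divfK ?T_nz.
Qed.

Lemma algX (c : F) n : (c ^+ n)%:A = (c%:A) ^+ n :> E.
Proof. by rewrite exprZn expr1n. Qed.

Lemma NX u n : N (u ^+ n) = N u ^+ n.
Proof. by rewrite /N -prodrXl; apply: eq_bigr => i _; rewrite sig_X. Qed.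

Lemma direct k (f : F) : f != 0 ->
  is_ppow p (alpha ^+ k / f%:A) -> is_ppow p (alpha ^+ k).
Proof.
move=> f0 [y [y0 hy]].
have [/dvdnP[q ->]|pk] := boolP (p %| k)%N.
  exists (alpha ^+ q); split; first by rewrite expf_neq0 ?alpha_nz.
  by rewrite exprM.
exfalso; apply: a_npow.
have Ny0 : fnorm y != 0.
  have hN : N y != 0 by apply/prodf_neq0 => k0 _; rewrite sig_eq0.
  by apply/eqP => h; move: hN; rewrite N_fnorm h scale0r eqxx.
have e : a ^+ k = (f * fnorm y) ^+ p.
  apply: (fmorph_inj (in_alg E)) => /=.
  have := congr1 N hy; rewrite N_mul N_inv NX N_alpha NX N_alg N_fnorm.
  move/(congr1 (fun w => w * (f ^+ p)%:A)); rewrite divfK ?alg_nz ?expf_neq0 //.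
  by move=> h; rewrite !algX algM h exprMn mulrC -!algX.
apply: (@coprime_pow_mem F (is_ppow p) a k).
- by move=> u v [u1 [u0 ->]] [v1 [v0 ->]]; exists (u1 * v1); rewrite mulf_neq0 // exprMn.
- by move=> u [u1 [u0 ->]]; exists u1^-1; rewrite invr_eq0 exprVn.
- exact: a_nz.
- exact: pk.
- by exists (f * fnorm y); rewrite mulf_neq0.
- by exists a.
Qed.
End Main.

Unset Implicit Arguments.
Set Strict Implicit.

Theorem lemma3p14 (F : fieldType) (p : nat)
  (p_prime : prime p) (p_odd : odd p)
  (zeta : F) (zeta_prim : p.-primitive_root zeta)
  (Frigid : p_rigid_field F p)
  (a : F) (a_nz : a != 0) (a_npow : ~ is_ppow p a)
  (E : fieldExtType F) (alpha : E) (hE : is_pure_ext p a alpha) :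
  (forall x : E, x != 0 ->
     exists (k : nat) (f : F), f != 0 /\
       is_ppow p (x / (alpha ^+ k * f%:A))) /\
  (forall (k : nat) (f : F), f != 0 ->
     is_ppow p (alpha ^+ k / f%:A) -> is_ppow p (alpha ^+ k)).
Proof.
have hrig : p_rigid_elt p a := Frigid a a_nz a_npow.
split.
  move=> x x0.
  have [k [f [y [f0 y0 ->]]]] := span p_prime p_odd zeta_prim a_nz a_npow hE hrig x0.
  exists k, f; split => //; exists y; split => //.
  have an := alpha_nz p_prime a_nz hE.
  by rewrite mulrC mulKf // mulf_neq0 ?expf_neq0 ?alg_nz.
move=> k f f0 h.
exact: (direct p_prime p_odd zeta_prim a_nz a_npow hE f0 h).
Qed.
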